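(* Let $K\ge1$, let $\mathbf{\Phi}\in\mathbb{R}^{m\times n}$ satisfy the RIP with $\delta_{K+1}<\frac{1}{\sqrt K+1}$, let $\mathbf{x}\in\mathbb{R}^n$ with $|\mathrm{supp}(\mathbf{x})|=K$, $\mathbf{v}\in\mathbb{R}^m$, $\mathbf{y}=\mathbf{\Phi}\mathbf{x}+\mathbf{v}$. If $$\sqrt{\mathrm{SNR}} > \frac{(\sqrt K+1)(1+\delta_{K+1})}{1-(\sqrt K+1)\delta_{K+1}},$$ then every index $t\in\arg\max_{i\in\Omega}|\langle\phi_i,\mathbf{y}\rangle|$ belongs to $\mathrm{supp}(\mathbf{x})$; i.e., the first iteration of OMP selects a correct index.
   Context: $\Omega=\{1,\dots,n\}$; $\phi_i$ is the $i$-th column of $\mathbf{\Phi}$. RIP: for an integer $s\ge1$, the isometry constant $\delta_s$ of $\mathbf{\Phi}$ is the smallest $c\in[0,1)$ such that $(1-c)\|\mathbf{z}\|_2^2 \le \|\mathbf{\Phi}\mathbf{z}\|_2^2 \le (1+c)\|\mathbf{z}\|_2^2$ for all $s$-sparse $\mathbf{z}$. $\mathrm{SNR} := \|\mathbf{\Phi}\mathbf{x}\|_2^2/\|\mathbf{v}\|_2^2$ ($+\infty$ if $\mathbf{v}=\mathbf{0}$). *)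

(* Defs.v *)
(* The reals are modelled by an arbitrary real closed field
   R : rcfType (the statement is purely algebraic/order-theoretic). *)
From HB Require Import structures.
From mathcomp Require Import all_boot all_order all_algebra.
Set Implicit Arguments. Unset Strict Implicit. Unset Printing Implicit Defensive.
Import Order.TTheory GRing.Theory Num.Theory.
Local Open Scope ring_scope.

Definition sqnorm (R : rcfType) (k : nat) (z : 'cV[R]_k) : R :=
  \sum_(i < k) z i 0 ^+ 2.

Definition supp (R : rcfType) (k : nat) (z : 'cV[R]_k) : {set 'I_k} :=
  [set i | z i 0 != 0].

Definition sparse (R : rcfType) (k s : nat) (z : 'cV[R]_k) : Prop :=
  (#|supp z| <= s)%N.

Definition rip_bound (R : rcfType) (m n s : nat) (Phi : 'M[R]_(m, n)) (c : R) : Prop :=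
  forall z : 'cV[R]_n, sparse s z ->
    (1 - c) * sqnorm z <= sqnorm (Phi *m z) /\ sqnorm (Phi *m z) <= (1 + c) * sqnorm z.

Definition isometry_const (R : rcfType) (m n s : nat) (Phi : 'M[R]_(m, n)) (delta : R) : Prop :=
  [/\ 0 <= delta, delta < 1, rip_bound s Phi delta &
      forall c, 0 <= c -> c < 1 -> rip_bound s Phi c -> delta <= c].

Definition phi_col (R : rcfType) (m n : nat) (Phi : 'M[R]_(m, n)) (i : 'I_n) : 'cV[R]_m :=
  col i Phi.

Definition inner (R : rcfType) (k : nat) (a b : 'cV[R]_k) : R :=
  \sum_(j < k) a j 0 * b j 0.

Definition omp_argmax (R : rcfType) (m n : nat) (Phi : 'M[R]_(m, n)) (y : 'cV[R]_m) (t : 'I_n) : Prop :=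
  forall i : 'I_n, `|inner (phi_col Phi i) y| <= `|inner (phi_col Phi t) y|.

(* sqrt(SNR) > bound, with SNR = ||Phi x||^2/||v||^2 and SNR = +oo if v = 0 *)
Definition sqrt_snr_gt (R : rcfType) (m n : nat) (Phi : 'M[R]_(m, n)) (x : 'cV[R]_n)
  (v : 'cV[R]_m) (bound : R) : Prop :=
  v = 0 \/ (v <> 0 /\ Num.sqrt (sqnorm (Phi *m x) / sqnorm v) > bound).

(* Main.v *)
Require Import Defs.
From HB Require Import structures.
From mathcomp Require Import all_boot all_order all_algebra.
From mathcomp Require Import ring lra.
Import Order.TTheory GRing.Theory Num.Theory.
Local Open Scope ring_scope.

Set Implicit Arguments. Unset Strict Implicit.
Section H.
Variable R : rcfType.

Lemma sqnorm_ge0 k (z : 'cV[R]_k) : 0 <= sqnorm z.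
Proof. by apply: sumr_ge0 => i _; rewrite sqr_ge0. Qed.

Lemma innerC k (a b : 'cV[R]_k) : inner a b = inner b a.
Proof. by apply: eq_bigr => i _; rewrite mulrC. Qed.

Lemma innerD k (a b c : 'cV[R]_k) : inner a (b + c) = inner a b + inner a c.
Proof. rewrite /inner -big_split; apply: eq_bigr => i _ /=; rewrite !mxE; ring. Qed.

Lemma sqnormDZ k (u w : 'cV[R]_k) (t : R) :
  sqnorm (u + t *: w) = sqnorm u + 2 * t * inner u w + t ^+ 2 * sqnorm w.
Proof.
rewrite /sqnorm /inner mulr_sumr mulr_sumr -!big_split; apply: eq_bigr => i _.
rewrite !mxE /=; ring.
Qed.

Lemma CS k (a b : 'cV[R]_k) : inner a b ^+ 2 <= sqnorm a * sqnorm b.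
Proof.
have h1 := sqnorm_ge0 (sqnorm b *: a + (- inner a b) *: b).
have h2 := sqnorm_ge0 (sqnorm a *: b + (- inner a b) *: a).
have h3 := sqnorm_ge0 (a + (-1) *: b).
have h4 := sqnorm_ge0 (a + 1 *: b).
have sZ : forall (c : R) (z : 'cV[R]_k), sqnorm (c *: z) = c ^+ 2 * sqnorm z.
  by move=> c z; rewrite /sqnorm mulr_sumr; apply: eq_bigr => i _; rewrite mxE; ring.
have iZl : forall (c : R) (z w : 'cV[R]_k), inner (c *: z) w = c * inner z w.
  by move=> c z w; rewrite /inner mulr_sumr; apply: eq_bigr => i _; rewrite mxE; ring.
rewrite sqnormDZ sZ iZl in h1.
rewrite sqnormDZ sZ iZl [inner b a]innerC in h2.
rewrite sqnormDZ in h3. rewrite sqnormDZ in h4.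
have hA := sqnorm_ge0 a; have hB := sqnorm_ge0 b.
set A := sqnorm a in h1 h2 h3 h4 hA *; set B := sqnorm b in h1 h2 h3 h4 hB *.
set I := inner a b in h1 h2 h3 h4 *.
have [B0|Bp] := eqVneq B 0.
  have [A0|Ap] := eqVneq A 0.
    rewrite A0 B0 in h3 h4 *. have -> : I = 0 by lra. lra.
  have Ap' : 0 < A by rewrite lt0r Ap.
  have : 0 <= A * (A * B - I ^+ 2) by nra.
  rewrite pmulr_rge0 //; lra.
have Bp' : 0 < B by rewrite lt0r Bp.
have : 0 <= B * (A * B - I ^+ 2) by nra.
rewrite pmulr_rge0 //; lra.
Qed.

Lemma CSabs k (a b : 'cV[R]_k) :
  `|inner a b| <= Num.sqrt (sqnorm a) * Num.sqrt (sqnorm b).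
Proof.
rewrite -sqrtrM ?sqnorm_ge0 // -sqrtr_sqr ler_sqrt; last by rewrite mulr_ge0 ?sqnorm_ge0.
exact: CS.
Qed.


Lemma inner_sqnorm k (z : 'cV[R]_k) : inner z z = sqnorm z.
Proof. by apply: eq_bigr => i _; rewrite expr2. Qed.

Lemma sum_col m n (Phi : 'M[R]_(m, n)) (x : 'cV[R]_n) (y : 'cV[R]_m) :
  \sum_(i < n) x i 0 * inner (col i Phi) y = inner (Phi *m x) y.
Proof.
rewrite /inner; under eq_bigr do rewrite mulr_sumr.
rewrite exchange_big /=; apply: eq_bigr => j _.
rewrite !mxE big_distrl /=; apply: eq_bigr => i _; rewrite !mxE; ring.
Qed.

Lemma sqnorm_delta n (t : 'I_n) : sqnorm (delta_mx t 0 : 'cV[R]_n) = 1.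
Proof.
rewrite /sqnorm (bigD1 t) //= big1 => [|i /negPf ne]; rewrite !mxE ?eqxx ?ne /=.
  by rewrite expr1n addr0.
by rewrite expr0n.
Qed.

Lemma inner_delta n (x : 'cV[R]_n) (t : 'I_n) : inner x (delta_mx t 0) = x t 0.
Proof.
rewrite /inner (bigD1 t) //= big1 => [|i /negPf ne]; rewrite !mxE ?eqxx ?ne /=.
  by rewrite mulr1 addr0.
by rewrite mulr0.
Qed.

Lemma sqnorm0 k : sqnorm (0 : 'cV[R]_k) = 0.
Proof. by rewrite /sqnorm big1 // => i _; rewrite mxE expr0n. Qed.

End H.

Unset Implicit Arguments. Set Strict Implicit.
Theorem mainTheorem5 (R : rcfType) (m n K : nat) (Phi : 'M[R]_(m, n)) (delta : R)
  (x : 'cV[R]_n) (v y : 'cV[R]_m) :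
  (1 <= K)%N ->
  isometry_const K.+1 Phi delta ->
  delta < 1 / (Num.sqrt (K%:R) + 1) ->
  #|supp x| = K ->
  y = Phi *m x + v ->
  sqrt_snr_gt Phi x v
    ((Num.sqrt (K%:R) + 1) * (1 + delta) / (1 - (Num.sqrt (K%:R) + 1) * delta)) ->
  forall t : 'I_n, omp_argmax Phi y t -> t \in supp x.
Proof.
move=> K1 [d0 d1 rip _] hd hS hy hsnr t ht.
apply: contraT => tS.
have xt0 : x t 0 = 0 by move: tS; rewrite inE negbK => /eqP.
set e : 'cV[R]_n := delta_mx t 0.
set d := delta in d0 d1 rip hd hsnr *.
set s := Num.sqrt (K%:R) in hd hsnr *.
have s0 : 0 <= s := sqrtr_ge0 _.
set b2 := sqnorm x.
set A := sqnorm (Phi *m x).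
set V := sqnorm v.
set b := Num.sqrt b2. set a := Num.sqrt A. set nv := Num.sqrt V.
have b20 : 0 <= b2 := sqnorm_ge0 _.
have A0 : 0 <= A := sqnorm_ge0 _.
have V0 : 0 <= V := sqnorm_ge0 _.
have bb : b ^+ 2 = b2 by rewrite sqr_sqrtr.
have aa : a ^+ 2 = A by rewrite sqr_sqrtr.
have b0 : 0 <= b := sqrtr_ge0 _.
have a0 : 0 <= a := sqrtr_ge0 _.
have nv0 : 0 <= nv := sqrtr_ge0 _.
have b2p : 0 < b2.
  have : (0 < #|supp x|)%N by rewrite hS.
  case/card_gt0P => i; rewrite inE => xi.
  rewrite /b2 /sqnorm (bigD1 i) //=.
  have : 0 <= \sum_(j < n | j != i) x j 0 ^+ 2 by apply: sumr_ge0 => j _; rewrite sqr_ge0.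
  have : 0 < x i 0 ^+ 2 by rewrite lt0r sqr_ge0 sqrf_eq0 xi.
  lra.
have bp : 0 < b by rewrite sqrtr_gt0.
have [hx1 _] : (1 - d) * b2 <= A /\ A <= (1 + d) * b2.
  by apply: rip; rewrite /sparse hS.
have [_ he] : (1 - d) * sqnorm e <= sqnorm (Phi *m e) /\ sqnorm (Phi *m e) <= (1 + d) * sqnorm e.
  apply: rip; rewrite /sparse (leq_trans (subset_leq_card (B := [set t]) _)) ?cards1 //.
  apply/subsetP => i; rewrite !inE !mxE; case: (eqVneq i t) => //= _.
  by rewrite eqxx.
rewrite sqnorm_delta mulr1 in he.
set P := sqnorm (Phi *m e) in he.
set J := inner (Phi *m x) (Phi *m e).
(* polarization *)
have pol : forall c : R,
    (1 - d) * (b2 + c ^+ 2) <= A + 2 * c * J + c ^+ 2 * P /\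
    A + 2 * c * J + c ^+ 2 * P <= (1 + d) * (b2 + c ^+ 2).
  move=> c.
  have -> : A + 2 * c * J + c ^+ 2 * P = sqnorm (Phi *m (x + c *: e)).
    by rewrite mulmxDr -scalemxAr sqnormDZ.
  have -> : b2 + c ^+ 2 = sqnorm (x + c *: e).
    by rewrite sqnormDZ inner_delta xt0 sqnorm_delta; rewrite /b2; ring.
  apply: rip; rewrite /sparse.
  have hc : (#|t |: supp x| <= K.+1)%N by rewrite cardsU1 tS hS.
  apply: leq_trans hc; apply: subset_leq_card.
  apply/subsetP => i; rewrite !inE !mxE; case: (eqVneq i t) => //= _.
  by rewrite mulr0 addr0.
have [p1 p2] := pol b.
have [p3 p4] := pol (- b).
rewrite sqrrN bb in p3 p4. rewrite bb in p1 p2.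
have hJ : `|J| <= d * b.
  rewrite ler_norml; apply/andP; split; nra.
set p := Num.sqrt (1 + d).
have p0 : 0 <= p := sqrtr_ge0 _.
have hN : `|inner (Phi *m e) v| <= p * nv.
  apply: (le_trans (CSabs _ _)); apply: ler_wpM2r => //.
  by rewrite ler_sqrt //; lra.
set M := `|inner (col t Phi) y|.
have hM : M <= d * b + p * nv.
  rewrite /M colE -/e hy innerD [inner _ (Phi *m x)]innerC.
  apply: (le_trans (ler_normD _ _)); lra.
have hl1 : \sum_(i < n) `|x i 0| <= s * b.
  set u : 'cV[R]_n := \col_i `|x i 0|.
  set w : 'cV[R]_n := \col_i ((i \in supp x)%:R).
  have -> : \sum_(i < n) `|x i 0| = inner u w.
    apply: eq_bigr => i _; rewrite !mxE inE.
    by have [->|nz] := eqVneq (x i 0) 0; rewrite ?normr0 ?mul0r ?mulr1.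
  apply: (le_trans (ler_norm _)); apply: (le_trans (CSabs _ _)).
  have -> : sqnorm u = b2.
    by apply: eq_bigr => i _; rewrite mxE real_normK ?num_real.
  have -> : sqnorm w = K%:R.
    rewrite -hS -sumr_const big_mkcond /=; apply: eq_bigr => i _; rewrite mxE.
    by case: (i \in supp x); rewrite ?expr1n ?expr0n.
  by rewrite mulrC.
have hsum : inner (Phi *m x) y <= s * b * M.
  rewrite -sum_col.
  apply: (le_trans (y := \sum_(i < n) `|x i 0| * M)).
    apply: ler_sum => i _; apply: (le_trans (ler_norm _)); rewrite normrM.
    by apply: ler_wpM2l => //; apply: ht.
  rewrite -mulr_suml; apply: ler_wpM2r => //; exact: normr_ge0.
have hxv : `|inner (Phi *m x) v| <= a * nv by apply: CSabs.
have E1 : A - a * nv <= s * b * (d * b + p * nv).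
  have e1 : inner (Phi *m x) y = A + inner (Phi *m x) v by rewrite hy innerD inner_sqnorm.
  have e2 : - (a * nv) <= inner (Phi *m x) v by move: hxv; rewrite ler_norml => /andP[].
  have e3 : s * b * M <= s * b * (d * b + p * nv) by apply: ler_wpM2l => //; rewrite mulr_ge0.
  lra.
set c := Num.sqrt (1 - d).
have c0 : 0 <= c := sqrtr_ge0 _.
have cc : c ^+ 2 = 1 - d by rewrite sqr_sqrtr //; lra.
have pp : p ^+ 2 = 1 + d by rewrite sqr_sqrtr //; lra.
have bc : b * c <= a.
  by rewrite -sqrtrM // ler_sqrt // mulrC.
have pc : p * c <= 1 + d.
  rewrite -sqrtrM; last lra.
  rewrite -[X in _ <= X]ger0_norm; last lra.
  rewrite -sqrtr_sqr ler_sqrt; [nra | exact: sqr_ge0].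
have ap : 0 < a.
  rewrite sqrtr_gt0; nra.
have E2 : (1 - d) * (A - a * nv) <= s * d * A + s * a * (1 + d) * nv.
  have f1 : (1 - d) * (A - a * nv) <= c ^+ 2 * (s * b * (d * b + p * nv)).
    rewrite cc; apply: ler_wpM2l => //; lra.
  have f2 : c ^+ 2 * (s * b * (d * b + p * nv)) = s * d * (b * c) ^+ 2 + s * (b * c) * (p * c) * nv by ring.
  have f3 : (b * c) ^+ 2 <= A by rewrite -aa; apply: lerXn2r; rewrite ?nnegrE ?mulr_ge0.
  have f4 : s * (b * c) * (p * c) * nv <= s * a * (1 + d) * nv.
    apply: ler_wpM2r => //; rewrite -!mulrA; apply: ler_wpM2l => //.
    by rewrite mulrA; apply: ler_pM; rewrite ?mulr_ge0.
  have f5 : s * d * (b * c) ^+ 2 <= s * d * A by apply: ler_wpM2l => //; rewrite mulr_ge0.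
  lra.
have D0 : 0 < 1 - (s + 1) * d.
  move: hd; rewrite ltr_pdivlMr; last lra.
  lra.
have E3 : a * (1 - (s + 1) * d) <= (s + 1) * (1 + d) * nv.
  have : a * (a * (1 - (s + 1) * d)) <= a * ((s + 1) * (1 + d) * nv).
    rewrite -aa in E2; have := mulr_ge0 (mulr_ge0 d0 a0) nv0; lra.
  by rewrite ler_pM2l.
have E4 : (s + 1) * (1 + d) * nv < a * (1 - (s + 1) * d).
  case: hsnr => [v0|[vn0 hq]].
    have : nv = 0 by rewrite /nv /V v0 sqnorm0 sqrtr0.
    move=> ->; rewrite mulr0; exact: mulr_gt0.
  have Bp : 0 < (s + 1) * (1 + d) / (1 - (s + 1) * d).
    by apply: divr_gt0 => //; apply: mulr_gt0; lra.
  have [V00|Vn] := eqVneq V 0.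
    by move: hq; rewrite -/V V00 invr0 mulr0 sqrtr0 => hq; move: (lt_trans Bp hq); rewrite ltxx.
  have Vp : 0 < V by rewrite lt0r Vn.
  have nvp : 0 < nv by rewrite sqrtr_gt0.
  move: hq; rewrite -/V -/A sqrtrM // sqrtrV // -/a -/nv ltr_pdivlMr // mulrAC ltr_pdivrMr //.
by move: (lt_le_trans E4 E3); rewrite ltxx.
Qed.
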